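(* Let $R$ be a commutative ring, let $\mathfrak{m}_1,\ldots,\mathfrak{m}_d$ be finitely many distinct maximal ideals of $R$, let $c_1,\ldots,c_d\geq 1$ be integers and $I=\bigcap_{i=1}^d \mathfrak{m}_i^{c_i}$. Then $R/I$ is a GPP-ring.
   Context: A commutative ring $A$ is a GPP-ring (generalized p.p. ring) if for each $f\in A$ there exists an integer $n\geq 1$ such that the ideal $Af^n$ is a projective $A$-module. *)

(* Defs.v *)
From mathcomp Require Import all_boot all_algebra.
Set Implicit Arguments. Unset Strict Implicit. Unset Printing Implicit Defensive.
Import GRing.Theory.
Local Open Scope ring_scope.

Definition is_ideal (R : comPzRingType) (I : R -> Prop) : Prop :=
  [/\ I 0, (forall x y, I x -> I y -> I (x + y)) & (forall a x, I x -> I (a * x))].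

Definition maximal_ideal (R : comPzRingType) (m : R -> Prop) : Prop :=
  [/\ is_ideal m, ~ m 1 &
      forall J : R -> Prop, is_ideal J -> (forall x, m x -> J x) ->
        J 1 \/ (forall x, J x -> m x)].

Definition ideal_mul (R : comPzRingType) (I J : R -> Prop) : R -> Prop :=
  fun x => exists s : seq (R * R),
    (forall p, p \in s -> I p.1 /\ J p.2) /\ x = \sum_(p <- s) p.1 * p.2.

Fixpoint ideal_pow (R : comPzRingType) (I : R -> Prop) (c : nat) : R -> Prop :=
  match c with
  | 0 => fun _ => True
  | c'.+1 => ideal_mul (ideal_pow I c') I
  end.

(* A map h : A -> N that is A-linear on the subset P (values outside P are
   irrelevant): this represents an A-linear map P -> N on the submodule P. *)
Definition linear_on (A : comPzRingType) (N : lmodType A)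
    (P : A -> Prop) (h : A -> N) : Prop :=
  (forall x y, P x -> P y -> h (x + y) = h x + h y) /\
  (forall (a x : A), P x -> h (a * x) = a *: h x).

Definition projective_submodule (A : comPzRingType) (P : A -> Prop) : Prop :=
  forall (M N : lmodType A) (g : {linear M -> N}) (h : A -> N),
    (forall y : N, exists x : M, g x = y) ->
    linear_on P h ->
    exists k : A -> M, linear_on P k /\ (forall x, P x -> g (k x) = h x).

Definition principal_ideal (A : comPzRingType) (f : A) : A -> Prop :=
  fun x => exists a : A, x = a * f.

Definition GPP_ring (A : comPzRingType) : Prop :=
  forall f : A, exists n : nat, (1 <= n)%N /\
    projective_submodule (principal_ideal (f ^+ n)).

(* Main.v *)
Require Import Defs.
From mathcomp Require Import all_boot all_algebra.
From mathcomp Require Import ring.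
From Stdlib Require Import Classical.
Set Implicit Arguments. Unset Strict Implicit. Unset Printing Implicit Defensive.
Import GRing.Theory.
Local Open Scope ring_scope.

Section Aux.
Variable R : comPzRingType.

Lemma ideal_mul_ideal (I J : R -> Prop) : is_ideal I -> is_ideal (ideal_mul I J).
Proof.
move=> [I0 ID IM]; split.
- by exists [::]; split => //; rewrite big_nil.
- move=> x y [s [Hs ->]] [t [Ht ->]]; exists (s ++ t); split; last by rewrite big_cat.
  by move=> p; rewrite mem_cat => /orP [] ?; [exact: Hs| exact: Ht].
- move=> a x [s [Hs ->]]; exists [seq (a * p.1, p.2) | p <- s]; split.
  + move=> p /mapP [q qs ->] /=; have [h1 h2] := Hs q qs; split; [exact: IM|done].
  + rewrite big_map mulr_sumr; apply: eq_bigr => p _ /=; by rewrite mulrA.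
Qed.

Lemma ideal_pow_ideal (I : R -> Prop) c : is_ideal I -> is_ideal (ideal_pow I c).
Proof.
move=> HI; elim: c => [|c IH] /=; first by split.
exact: ideal_mul_ideal.
Qed.

Lemma ideal_pow_exp (I : R -> Prop) c x : I x -> ideal_pow I c (x ^+ c).
Proof.
move=> Hx; elim: c => [|c IH] //=; exists [:: (x ^+ c, x)]; split.
  by move=> p; rewrite inE => /eqP -> /=; split.
by rewrite big_seq1 exprSr.
Qed.

Lemma idl (I : R -> Prop) a x : is_ideal I -> I x -> I (a * x).
Proof. by move=> [_ _ H]; apply: H. Qed.

Lemma idr (I : R -> Prop) a x : is_ideal I -> I x -> I (x * a).
Proof. by rewrite mulrC; apply: idl. Qed.

Lemma inv_mod_max (m : R -> Prop) r : maximal_ideal m -> ~ m r -> exists s, m (1 - s * r).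
Proof.
move=> [[m0 mD mM] m1 mx] nr.
pose J := fun x => exists y a, m y /\ x = y + a * r.
have HJ : is_ideal J.
  split.
  - by exists 0, 0; split => //; rewrite mul0r addr0.
  - move=> x y [y1 [a1 [H1 ->]]] [y2 [a2 [H2 ->]]].
    exists (y1 + y2), (a1 + a2); split; [exact: mD | ring].
  - move=> a x [y1 [a1 [H1 ->]]]; exists (a * y1), (a * a1); split; [exact: mM|ring].
have sub : forall x, m x -> J x by move=> x Hx; exists x, 0; split => //; rewrite mul0r addr0.
case: (mx J HJ sub) => [[y [a [Hy E]]]|H].
  by exists a; have -> : 1 - a * r = y by rewrite E; ring.
by exfalso; apply: nr; apply: H; exists 0, 1; split => //; rewrite mul1r add0r.
Qed.

Lemma one_sub_pow (r s : R) c : exists q, (1 - s * r) ^+ c = 1 - r * q.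
Proof.
elim: c => [|c [q Hq]]; first by exists 0; rewrite expr0 mulr0 subr0.
by exists (q + s - q * s * r); rewrite exprSr Hq; ring.
Qed.

Lemma geom (y : R) n : exists g, 1 - y ^+ n = (1 - y) * g.
Proof.
elim: n => [|n [g Hg]]; first by exists 0; rewrite expr0 subrr mulr0.
exists (g + y ^+ n); rewrite mulrDr -Hg exprSr; ring.
Qed.

Lemma pow_unit_mod (m : R -> Prop) c r : maximal_ideal m -> ~ m r ->
  exists q, ideal_pow m c (1 - r * q).
Proof.
move=> Hm nr; have [s Hs] := inv_mod_max Hm nr.
have [q Hq] := one_sub_pow r s c.
by exists q; rewrite -Hq; apply: ideal_pow_exp.
Qed.

Lemma main_R d (m : 'I_d -> R -> Prop) (c : 'I_d -> nat)
  (hmax : forall i, maximal_ideal (m i)) (r : R) :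
  exists n a, (1 <= n)%N /\
    forall i, ideal_pow (m i) (c i) (r ^+ n - a * (r ^+ n * r ^+ n)).
Proof.
have Hid : forall i, is_ideal (ideal_pow (m i) (c i)).
  by move=> i; apply: ideal_pow_ideal; case: (hmax i).
have step1 : forall L : seq 'I_d, exists t, forall i, i \in L ->
    m i r \/ ideal_pow (m i) (c i) (1 - r * t).
  elim => [|i L [t Ht]]; first by exists 0.
  case: (classic (m i r)) => Hi.
    exists t => j; rewrite inE => /orP [/eqP ->|jL]; [by left | exact: Ht].
  have [q Hq] := pow_unit_mod (c i) (hmax i) Hi.
  exists (t + q - r * t * q) => j.
  have -> : 1 - r * (t + q - r * t * q) = (1 - r * t) * (1 - r * q) by ring.
  rewrite inE => /orP [/eqP ->|jL]; first by right; apply: idl.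
  case: (Ht j jL) => H; [by left | by right; apply: idr].
have [t Ht] := step1 (enum 'I_d).
exists (\max_(i < d) c i).+1, (t ^+ (\max_(i < d) c i).+1); split => // i.
set n := (\max_(i < d) c i).+1.
case: (Ht i (mem_enum _ i)) => H.
  have le : (c i <= n)%N by apply: leqW; apply: leq_bigmax.
  have En : n = ((n - c i) + c i)%N by rewrite subnK.
  have -> : r ^+ n - t ^+ n * (r ^+ n * r ^+ n)
     = (r ^+ (n - c i) * (1 - t ^+ n * r ^+ n)) * r ^+ (c i).
    set e := (n - c i)%N; rewrite En !exprD; ring.
  by apply: idl => //; apply: ideal_pow_exp.
have [g Hg] := geom (r * t) n.
have -> : r ^+ n - t ^+ n * (r ^+ n * r ^+ n) = (r ^+ n * g) * (1 - r * t).
  transitivity (r ^+ n * (1 - (r * t) ^+ n)); first by rewrite exprMn; ring.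
  by rewrite Hg; ring.
by apply: idl.
Qed.

End Aux.

Lemma proj_of_regular (A : comPzRingType) (g b : A) :
  b * (g * g) = g -> projective_submodule (principal_ideal g).
Proof.
move=> Hb M N lin h hs [hD hZ].
pose e := b * g.
have Pe : principal_ideal g e by exists b.
have [m0 Hm0] := hs (h e).
exists (fun x => x *: m0); split; first split.
- by move=> x y _ _; exact: scalerDl.
- by move=> a x _; rewrite scalerA.
- move=> x [a ->]; rewrite linearZ /= Hm0 -hZ //; congr h.
  by rewrite /e -[in RHS]Hb; ring.
Qed.

Theorem proposition2p6 (R : comPzRingType) (d : nat)
    (m : 'I_d -> R -> Prop) (c : 'I_d -> nat)
    (hmax : forall i, maximal_ideal (m i))
    (hdist : forall i j, i != j -> ~ (forall x, m i x <-> m j x))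
    (hc : forall i, (1 <= c i)%N)
    (S : comPzRingType) (phi : {rmorphism R -> S})
    (hsurj : forall y : S, exists x : R, phi x = y)
    (hker : forall x : R, phi x = 0 <-> (forall i, ideal_pow (m i) (c i) x)) :
  GPP_ring S.
Proof.
move=> f; have [r <-] := hsurj f.
have [n [a [n1 H]]] := main_R c hmax r.
exists n; split => //.
apply: (@proj_of_regular _ _ (phi a)).
have /hker : forall i, ideal_pow (m i) (c i) (r ^+ n - a * (r ^+ n * r ^+ n)) by [].
rewrite rmorphB rmorphM rmorphM !rmorphXn => /eqP; rewrite subr_eq0 => /eqP E. by rewrite -E.
Qed.
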